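(* For all $\boldsymbol\mu,\boldsymbol\mu'\in\mathcal P(\mathcal X\times[K])$ and every collection $\boldsymbol\pi=(\pi_k)_{k\in[K]}$ of decision rules $\pi_k:\mathcal X\times\mathcal P(\mathcal X\times[K])\to\mathcal P(\mathcal U)$ with $|\pi_k(x,\boldsymbol\mu_1)-\pi_k(x,\boldsymbol\mu_2)|_1\le L_Q|\boldsymbol\mu_1-\boldsymbol\mu_2|_1$ for all $x,k,\boldsymbol\mu_1,\boldsymbol\mu_2$, $$|P^{\mathrm{MF}}(\boldsymbol\mu,\boldsymbol\pi)-P^{\mathrm{MF}}(\boldsymbol\mu',\boldsymbol\pi)|_1\le S_P|\boldsymbol\mu-\boldsymbol\mu'|_1,\qquad S_P=(1+L_Q)+L_P(2+L_Q).$$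
   Context: $K\ge1$, $[K]=\{1,\dots,K\}$, $\mathcal X,\mathcal U$ finite, $\mathcal P(A)$ probability distributions on $A$, $|\cdot|_1$ the $L_1$ norm, $L_P,L_Q>0$. For each $k$, $P_k:\mathcal X\times\mathcal U\times\mathcal P(\mathcal X\times[K])\times\mathcal P(\mathcal U\times[K])\to\mathcal P(\mathcal X)$ satisfies $|P_k(x,u,\boldsymbol\mu_1,\boldsymbol\nu_1)-P_k(x,u,\boldsymbol\mu_2,\boldsymbol\nu_2)|_1\le L_P(|\boldsymbol\mu_1-\boldsymbol\mu_2|_1+|\boldsymbol\nu_1-\boldsymbol\nu_2|_1)$. Define $\nu^{\mathrm{MF}}(\boldsymbol\mu,\boldsymbol\pi)(u,k)=\sum_x\pi_k(x,\boldsymbol\mu)(u)\boldsymbol\mu(x,k)$ and $P^{\mathrm{MF}}(\boldsymbol\mu,\boldsymbol\pi)\in\mathcal P(\mathcal X\times[K])$ by $P^{\mathrm{MF}}(\boldsymbol\mu,\boldsymbol\pi)(x',k)=\sum_{x\in\mathcal X}\sum_{u\in\mathcal U}\boldsymbol\mu(x,k)\pi_k(x,\boldsymbol\mu)(u)P_k(x,u,\boldsymbol\mu,\nu^{\mathrm{MF}}(\boldsymbol\mu,\boldsymbol\pi))(x')$. *)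

(* Defs.v *)
From HB Require Import structures.
From mathcomp Require Import all_boot all_order all_algebra.
Set Implicit Arguments. Unset Strict Implicit. Unset Printing Implicit Defensive.
Import Order.TTheory GRing.Theory Num.Theory.
Local Open Scope ring_scope.

Section Defs.
Variable R : realFieldType.

Definition is_distr (T : finType) (p : {ffun T -> R}) : Prop :=
  (forall t, 0 <= p t) /\ \sum_t p t = 1.

Definition l1dist (T : finType) (f g : {ffun T -> R}) : R :=
  \sum_t `|f t - g t|.

Variables (X U : finType) (K : nat).

Definition policy := 'I_K -> X -> {ffun X * 'I_K -> R} -> {ffun U -> R}.
Definition kernel :=
  'I_K -> X -> U -> {ffun X * 'I_K -> R} -> {ffun U * 'I_K -> R} -> {ffun X -> R}.

Definition nuMF (mu : {ffun X * 'I_K -> R}) (pi : policy) : {ffun U * 'I_K -> R} :=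
  [ffun uk => \sum_(x : X) pi uk.2 x mu uk.1 * mu (x, uk.2)].

Definition PMF (P : kernel) (mu : {ffun X * 'I_K -> R}) (pi : policy)
  : {ffun X * 'I_K -> R} :=
  [ffun xk => \sum_(x : X) \sum_(u : U)
      mu (x, xk.2) * pi xk.2 x mu u * P xk.2 x u mu (nuMF mu pi) xk.1].

End Defs.

(* Main.v *)
Require Import Defs.
From HB Require Import structures.
From mathcomp Require Import all_boot all_order all_algebra.
From mathcomp Require Import ring.
Import Order.TTheory GRing.Theory Num.Theory.
Local Open Scope ring_scope.

Lemma sum_pairK (R : realFieldType) (X : finType) (K : nat) (F : X * 'I_K -> R) :
  \sum_t F t = \sum_(k : 'I_K) \sum_(x : X) F (x, k).
Proof.
rewrite exchange_big /= (pair_big predT predT (fun x k => F (x, k))) /=.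
by apply: eq_bigr => -[].
Qed.

Lemma distr_sum_mul (R : realFieldType) (T : finType) (p : {ffun T -> R}) c :
  is_distr p -> \sum_t p t * c = c.
Proof. by case=> _ h; rewrite -mulr_suml h mul1r. Qed.

Lemma distr_sum_mulr (R : realFieldType) (T : finType) (p : {ffun T -> R}) c :
  is_distr p -> \sum_t c * p t = c.
Proof. by case=> _ h; rewrite -mulr_sumr h mulr1. Qed.

Lemma nu_distr (R : realFieldType) (X U : finType) (K : nat)
  (mu : {ffun X * 'I_K -> R}) (pi : policy R X U K) :
  is_distr mu -> (forall k x m, is_distr m -> is_distr (pi k x m)) ->
  is_distr (nuMF mu pi).
Proof.
move=> hmu hpid; split.
  move=> t; rewrite ffunE; apply: sumr_ge0 => x _; apply: mulr_ge0.
    by case: (hpid t.2 x mu hmu).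
  by case: hmu.
rewrite (@sum_pairK _ _ _ (fun t => nuMF mu pi t)).
under eq_bigr => k _ do under eq_bigr => u _ do rewrite ffunE /=.
under eq_bigr => k _ do rewrite exchange_big /=.
rewrite [RHS](_ : 1 = \sum_(k : 'I_K) \sum_(x : X) mu (x, k)); last first.
  by case: hmu => _ <-; rewrite sum_pairK.
by apply: eq_bigr => k _; apply: eq_bigr => x _; rewrite distr_sum_mul //; apply: hpid.
Qed.

Theorem lemma4 (R : realFieldType) (X U : finType) (K : nat) (hK : (0 < K)%N)
  (LP LQ : R) (hLP : 0 < LP) (hLQ : 0 < LQ)
  (P : kernel R X U K)
  (hPd : forall k x u mu nu, is_distr mu -> is_distr nu ->
           is_distr (P k x u mu nu))
  (hPL : forall k x u mu1 nu1 mu2 nu2,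
           is_distr mu1 -> is_distr nu1 -> is_distr mu2 -> is_distr nu2 ->
           l1dist (P k x u mu1 nu1) (P k x u mu2 nu2)
             <= LP * (l1dist mu1 mu2 + l1dist nu1 nu2))
  (mu mu' : {ffun X * 'I_K -> R}) (hmu : is_distr mu) (hmu' : is_distr mu')
  (pi : policy R X U K)
  (hpid : forall k x m, is_distr m -> is_distr (pi k x m))
  (hpiL : forall k x m1 m2, is_distr m1 -> is_distr m2 ->
           l1dist (pi k x m1) (pi k x m2) <= LQ * l1dist m1 m2) :
  l1dist (PMF P mu pi) (PMF P mu' pi)
    <= ((1 + LQ) + LP * (2 + LQ)) * l1dist mu mu'.
Proof.
set d := l1dist mu mu'.
have hnu := @nu_distr _ _ _ _ _ _ hmu hpid.
have hnu' := @nu_distr _ _ _ _ _ _ hmu' hpid.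
have d0 : 0 <= d by apply: sumr_ge0 => t _; exact: normr_ge0.
have hmu0 : forall t, 0 <= mu t by case: hmu.
have hmu0' : forall t, 0 <= mu' t by case: hmu'.
have hq0 : forall k x m, is_distr m -> forall u, 0 <= pi k x m u.
  by move=> k x m hm; case: (hpid k x m hm).
have hmsum : \sum_(k : 'I_K) \sum_(x : X) mu' (x, k) = 1.
  by rewrite -(@sum_pairK _ _ _ (fun t => mu' t)); case: hmu'.
have hdnu : l1dist (nuMF mu pi) (nuMF mu' pi) <= (1 + LQ) * d.
  rewrite /l1dist (@sum_pairK _ _ _ (fun t => `|nuMF mu pi t - nuMF mu' pi t|)).
  apply: (@le_trans _ _ (\sum_(k : 'I_K) \sum_(u : U) \sum_(x : X)
     (pi k x mu u * `|mu (x, k) - mu' (x, k)| + mu' (x, k) * `|pi k x mu u - pi k x mu' u|))).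
    apply: ler_sum => k _; apply: ler_sum => u _; rewrite !ffunE /= -sumrB.
    apply: (le_trans (ler_norm_sum _ _ _)); apply: ler_sum => x _.
    have -> : pi k x mu u * mu (x, k) - pi k x mu' u * mu' (x, k) =
      pi k x mu u * (mu (x, k) - mu' (x, k)) + mu' (x, k) * (pi k x mu u - pi k x mu' u) by ring.
    apply: (le_trans (ler_normD _ _)).
    by rewrite !normrM (ger0_norm (hq0 _ _ _ hmu u)) (ger0_norm (hmu0' _)).
  under eq_bigr => k _ do rewrite exchange_big /=.
  under eq_bigr => k _ do under eq_bigr => x _ do rewrite big_split /=.
  under eq_bigr => k _ do rewrite big_split /=.
  rewrite big_split /= mulrDl mul1r; apply: lerD.
    rewrite /d /l1dist (@sum_pairK _ _ _ (fun t => `|mu t - mu' t|)).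
    by apply: ler_sum => k _; apply: ler_sum => x _; rewrite distr_sum_mul //; apply: hpid.
  apply: (@le_trans _ _ (\sum_(k : 'I_K) \sum_(x : X) mu' (x, k) * (LQ * d))).
    apply: ler_sum => k _; apply: ler_sum => x _; rewrite -mulr_sumr.
    by apply: ler_wpM2l => //; apply: hpiL.
  by rewrite -(@sum_pairK _ _ _ (fun t => mu' t * (LQ * d))) distr_sum_mul.
set nu := nuMF mu pi. set nu' := nuMF mu' pi.
have hPs : forall k x u, \sum_x' P k x u mu nu x' = 1.
  by move=> k x u; case: (hPd k x u mu nu hmu hnu).
have hP0 : forall k x u x', 0 <= P k x u mu nu x'.
  by move=> k x u; case: (hPd k x u mu nu hmu hnu).
pose F1 k x u x' := `|mu (x, k) - mu' (x, k)| * pi k x mu u * P k x u mu nu x'.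
pose F2 k x u x' := mu' (x, k) * `|pi k x mu u - pi k x mu' u| * P k x u mu nu x'.
pose F3 k x u x' := mu' (x, k) * pi k x mu' u * `|P k x u mu nu x' - P k x u mu' nu' x'|.
apply: (@le_trans _ _ (\sum_(k : 'I_K) \sum_(x : X) \sum_(u : U) \sum_(x' : X)
    (F1 k x u x' + F2 k x u x' + F3 k x u x'))).
  rewrite /l1dist (@sum_pairK _ _ _ (fun t => `|PMF P mu pi t - PMF P mu' pi t|)).
  apply: ler_sum => k _.
  under [X in _ <= X]eq_bigr => x _ do rewrite exchange_big /=.
  rewrite [X in _ <= X]exchange_big /=.
  apply: ler_sum => x' _; rewrite !ffunE /= -sumrB.
  apply: (le_trans (ler_norm_sum _ _ _)); apply: ler_sum => x _.
  rewrite -sumrB; apply: (le_trans (ler_norm_sum _ _ _)); apply: ler_sum => u _.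
  have -> : mu (x, k) * pi k x mu u * P k x u mu nu x' -
     mu' (x, k) * pi k x mu' u * P k x u mu' nu' x' =
     (mu (x, k) - mu' (x, k)) * pi k x mu u * P k x u mu nu x' +
     mu' (x, k) * (pi k x mu u - pi k x mu' u) * P k x u mu nu x' +
     mu' (x, k) * pi k x mu' u * (P k x u mu nu x' - P k x u mu' nu' x') by ring.
  apply: (le_trans (ler_normD _ _)); apply: lerD; first apply: (le_trans (ler_normD _ _)).
  - apply: lerD; rewrite /F1 /F2 !normrM.
      by rewrite (ger0_norm (hq0 _ _ _ hmu u)) (ger0_norm (hP0 _ _ _ _)).
    by rewrite (ger0_norm (hmu0' _)) (ger0_norm (hP0 _ _ _ _)).
  - by rewrite /F3 !normrM (ger0_norm (hmu0' _)) (ger0_norm (hq0 _ _ _ hmu' u)).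
under eq_bigr => k _ do under eq_bigr => x _ do under eq_bigr => u _ do rewrite big_split /= big_split /=.
under eq_bigr => k _ do under eq_bigr => x _ do rewrite big_split /= big_split /=.
under eq_bigr => k _ do rewrite big_split /= big_split /=.
rewrite big_split /= big_split /=.
have e1 : \sum_(k : 'I_K) \sum_(x : X) \sum_(u : U) \sum_(x' : X) F1 k x u x' = d.
  rewrite /d /l1dist (@sum_pairK _ _ _ (fun t => `|mu t - mu' t|)).
  apply: eq_bigr => k _; apply: eq_bigr => x _.
  under eq_bigr => u _ do rewrite /F1 -mulr_sumr hPs mulr1.
  by rewrite distr_sum_mulr //; apply: hpid.
have e2 : \sum_(k : 'I_K) \sum_(x : X) \sum_(u : U) \sum_(x' : X) F2 k x u x' <= LQ * d.
  apply: (@le_trans _ _ (\sum_(k : 'I_K) \sum_(x : X) mu' (x, k) * (LQ * d))).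
    apply: ler_sum => k _; apply: ler_sum => x _.
    under eq_bigr => u _ do rewrite /F2 -mulr_sumr hPs mulr1.
    rewrite -mulr_sumr; apply: ler_wpM2l => //; exact: hpiL.
  by rewrite -(@sum_pairK _ _ _ (fun t => mu' t * (LQ * d))) distr_sum_mul.
have e3 : \sum_(k : 'I_K) \sum_(x : X) \sum_(u : U) \sum_(x' : X) F3 k x u x'
    <= LP * (d + (1 + LQ) * d).
  apply: (@le_trans _ _ (\sum_(k : 'I_K) \sum_(x : X) \sum_(u : U)
      mu' (x, k) * pi k x mu' u * (LP * (d + (1 + LQ) * d)))).
    apply: ler_sum => k _; apply: ler_sum => x _; apply: ler_sum => u _.
    rewrite /F3 -mulr_sumr; apply: ler_wpM2l.
      by apply: mulr_ge0 => //; apply: hq0.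
    apply: (le_trans (hPL _ _ _ _ _ _ _ hmu hnu hmu' hnu')).
    by apply: ler_wpM2l; [exact: ltW | apply: lerD].
  under eq_bigr => k _ do under eq_bigr => x _ do under eq_bigr => u _ do rewrite -mulrA.
  rewrite [X in X <= _](_ : _ = \sum_(k : 'I_K) \sum_(x : X) mu' (x, k) * (LP * (d + (1 + LQ) * d))); last first.
    apply: eq_bigr => k _; apply: eq_bigr => x _.
    by rewrite -mulr_sumr distr_sum_mul //; apply: hpid.
  by rewrite -(@sum_pairK _ _ _ (fun t => mu' t * (LP * (d + (1 + LQ) * d)))) distr_sum_mul.
rewrite e1.
have -> : ((1 + LQ) + LP * (2 + LQ)) * d = d + LQ * d + LP * (d + (1 + LQ) * d) by ring.
by apply: lerD => //; apply: lerD.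
Qed.
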